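(* For the complete graph $K_6$, with $\Pi_1,\dots,\Pi_{10}$ its pairs of disjoint odd cycles (triangles), there is no choice of edges $b^1,\dots,b^{10}$ with $b^i$ a bridge of $\Pi_i$ such that: for each $i$, the even closed walk $E_i$ of $b^i$ in $\Pi_i$ contains at most $2$ edges of $\{b^1,\dots,b^{10}\}\setminus\{b^i\}$, and the number of indices $i$ for which $E_i$ contains exactly $2$ edges of $\{b^1,\dots,b^{10}\}\setminus\{b^i\}$ is at most $2$.
   Context: Two odd cycles are disjoint if they have no common vertex. A bridge of a pair $(C,C')$ of disjoint odd cycles is an edge with one endpoint on $C$ and the other on $C'$. For a bridge $b=\{u,v\}$ of $(C,C')$ with $u\in C$, $v\in C'$, the even closed walk of $b$ in $(C,C')$ is the closed walk obtained by traversing $C$ once starting and ending at $u$, then $b$ from $u$ to $v$, then traversing $C'$ once starting and ending at $v$, then $b$ back from $v$ to $u$. An edge is contained in the walk if it occurs in it. *)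

(* Defs.v *)
From mathcomp Require Import all_boot.
Set Implicit Arguments. Unset Strict Implicit. Unset Printing Implicit Defensive.

Definition V := 'I_6.
Definition is_edge (e : {set V}) : bool := #|e| == 2.

(* Odd cycles of K_6 that occur in pairs of disjoint odd cycles are triangles;
   a triangle of K_6 is determined by its 3-element vertex set. *)
Definition is_triangle (C : {set V}) : bool := #|C| == 3.

Definition tri_edges (C : {set V}) : {set {set V}} :=
  [set e | is_edge e & e \subset C].

Definition is_pair (P : {set {set V}}) : bool :=
  [exists C : {set V}, exists C' : {set V},
     [&& is_triangle C, is_triangle C', [disjoint C & C'] & P == [set C; C']]].

Definition pairs : {set {set {set V}}} := [set P | is_pair P].

Definition is_bridge (P : {set {set V}}) (b : {set V}) : bool :=
  [exists C in P, exists C' in P,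
     (C != C') && [exists u in C, exists v in C', b == [set u; v]]].

(* Edges contained in the even closed walk of bridge b in P = {C, C'}:
   the edges of C, the edges of C', and b. *)
Definition walk_edges (P : {set {set V}}) (b : {set V}) : {set {set V}} :=
  (\bigcup_(C in P) tri_edges C) :|: [set b].

(* Main.v *)
Require Import Defs.
From mathcomp Require Import all_boot zify.
Set Implicit Arguments. Unset Strict Implicit. Unset Printing Implicit Defensive.

Definition elist : seq (nat*nat) := flatten [seq [seq (i,j) | j <- iota (i.+1) (5 - i)] | i <- iota 0 6].
Definition pn (n : nat) : nat * nat := nth (0,0) elist n.
Definition plist : seq (seq nat) := flatten [seq [seq [:: 0; i; j] | j <- iota i.+1 (5 - i)] | i <- iota 1 5].
Definition TC (l : seq nat) : seq nat := [seq n <- iota 0 15 | ((pn n).1 \in l) == ((pn n).2 \in l)].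
Definition BrC (l : seq nat) : seq nat := [seq n <- iota 0 15 | ((pn n).1 \in l) != ((pn n).2 \in l)].
Fixpoint allm n : seq (seq bool) := if n is n'.+1 then flatten (map (fun s => [:: true :: s; false :: s]) (allm n')) else [:: [::]].
Definition goodL (X Y : seq (seq nat)) (m : seq bool) : bool :=
  [&& all (has (nth false m)) Y, all (fun l => count (nth false m) l <= 2) X & count (fun l => count (nth false m) l == 2) X <= 2].
Definition Xlit : seq (seq nat) := [:: [:: 0; 1; 5; 12; 13; 14]; [:: 0; 2; 6; 10; 11; 14]; [:: 0; 3; 7; 9; 11; 13]; [:: 0; 4; 8; 9; 10; 12]; [:: 1; 2; 7; 8; 9; 14]; [:: 1; 3; 6; 8; 10; 13]; [:: 1; 4; 6; 7; 11; 12]; [:: 2; 3; 5; 8; 11; 12]; [:: 2; 4; 5; 7; 10; 13]; [:: 3; 4; 5; 6; 9; 14]].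
Definition Ylit : seq (seq nat) := [:: [:: 2; 3; 4; 6; 7; 8; 9; 10; 11]; [:: 1; 3; 4; 5; 7; 8; 9; 12; 13]; [:: 1; 2; 4; 5; 6; 8; 10; 12; 14]; [:: 1; 2; 3; 5; 6; 7; 11; 13; 14]; [:: 0; 3; 4; 5; 6; 10; 11; 12; 13]; [:: 0; 2; 4; 5; 7; 9; 11; 12; 14]; [:: 0; 2; 3; 5; 8; 9; 10; 13; 14]; [:: 0; 1; 4; 6; 7; 9; 10; 13; 14]; [:: 0; 1; 3; 6; 8; 9; 11; 12; 14]; [:: 0; 1; 2; 7; 8; 10; 11; 12; 13]].
Lemma Xeq : map TC plist = Xlit. Proof. by vm_compute. Qed.
Lemma Yeq : map BrC plist = Ylit. Proof. by vm_compute. Qed.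
Lemma check_all0 : all (fun m => ~~ goodL Xlit Ylit m) (allm 15).
Proof. vm_compute. reflexivity. Qed.
Lemma check_all m : m \in allm 15 -> ~~ goodL (map TC plist) (map BrC plist) m.
Proof. rewrite Xeq Yeq; exact: (allP check_all0). Qed.
Lemma mask_ok : all (fun m => ((size (mask m (iota 0 6)) == 3) && (0 \in mask m (iota 0 6))) ==> (mask m (iota 0 6) \in plist)) (allm 6).
Proof. vm_compute. reflexivity. Qed.

Definition tri (l : seq nat) : {set V} := [set x : V | nat_of_ord x \in l].
Definition es (n : nat) : {set V} := [set x : V | (nat_of_ord x == (pn n).1) || (nat_of_ord x == (pn n).2)].
Definition Pf (l : seq nat) : {set {set V}} := [set tri l; ~: tri l].

Lemma allm_mem s : s \in allm (size s).
Proof.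
elim: s => [|x s IH] //=. apply/flatten_mapP; exists s => //.
by case: x; rewrite !inE eqxx ?orbT.
Qed.

Lemma card_tri (C : {set V}) : #|C| = count (fun i => inord i \in C) (iota 0 6).
Proof.
rewrite cardE /enum_mem size_filter -enumT -val_enum_ord count_map.
apply: eq_count => x /=; by rewrite inord_val.
Qed.

Lemma pn_ok n : n < 15 -> ((pn n).1 < (pn n).2) && ((pn n).2 < 6).
Proof.
have H : all (fun n => ((pn n).1 < (pn n).2) && ((pn n).2 < 6)) (iota 0 15) by [].
by move=> hn; apply: (allP H); rewrite mem_iota.
Qed.

Lemma inordE (u : nat) (x : V) : u < 6 -> (x == inord u) = (val x == u).
Proof. by move=> h; rewrite -val_eqE /= inordK. Qed.

Lemma es2 n : n < 15 -> es n = [set inord (pn n).1; inord (pn n).2].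
Proof.
move=> /pn_ok /andP [h1 h2]; apply/setP => x.
by rewrite !inE !inordE //; apply: ltn_trans h2.
Qed.

Lemma card_es n : n < 15 -> #|es n| = 2.
Proof.
move=> hn; rewrite es2 // cards2; move: (pn_ok hn) => /andP [h1 h2].
have h0 : (pn n).1 < 6 by apply: ltn_trans h2.
by rewrite -val_eqE /= !inordK // ltn_eqF.
Qed.

Lemma es_uv (u v : V) : u != v -> exists2 n, n < 15 & es n = [set u; v].
Proof.
have H : all (fun u => all (fun v => (u < v) ==> ((u, v) \in elist)) (iota 0 6)) (iota 0 6) by [].
wlog huv : u v / val u < val v.
  move=> W neq; case: (ltngtP (val u) (val v)) => h; first exact: W.
    by rewrite setUC; apply: W; rewrite // eq_sym.
  by move: neq; rewrite -val_eqE h eqxx.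
move=> _.
have hm : (val u, val v) \in elist.
  have := allP (allP H (val u) _) (val v); rewrite !mem_iota /= !ltn_ord huv.
  by move=> /(_ isT isT).
exists (index (val u, val v) elist); first by rewrite -[15]/(size elist) index_mem.
apply/setP => x; rewrite /es /pn nth_index // !inE.
by rewrite !val_eqE.
Qed.

Lemma es_inj n n' : n < 15 -> n' < 15 -> es n = es n' -> n = n'.
Proof.
move=> hn hn' E.
have key : forall x, x < 6 -> ((x == (pn n).1) || (x == (pn n).2)) = ((x == (pn n').1) || (x == (pn n').2)).
  move=> x hx; have := congr1 (fun S : {set V} => (inord x : V) \in S) E.
  by rewrite /= !inE inordK.
move: (pn_ok hn) (pn_ok hn') => /andP [a1 a2] /andP [b1 b2].
have e1 := key _ (ltn_trans a1 a2); have e2 := key _ a2.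
have e3 := key _ (ltn_trans b1 b2); have e4 := key _ b2.
rewrite !eqxx /= ?orbT in e1 e2 e3 e4.
have Hp : pn n = pn n'.
  move: e1 e2 e3 e4; case: (pn n) a1 a2 => a b /= a1 a2; case: (pn n') b1 b2 => c d /= b1 b2.
  move=> /esym /orP [] /eqP e1 /esym /orP [] /eqP e2 /orP [] /eqP e3 /orP [] /eqP e4; try lia.
  by subst.
apply/eqP; rewrite -(@nth_uniq _ (0,0) elist) //.
by apply/eqP.
Qed.

Lemma es_sub n (D : {set V}) : n < 15 ->
  (es n \subset D) = (inord (pn n).1 \in D) && (inord (pn n).2 \in D).
Proof. by move=> hn; rewrite es2 // subUset !sub1set. Qed.

Lemma tri_in l u : u < 6 -> (inord u \in tri l) = (u \in l).
Proof. by move=> h; rewrite inE inordK. Qed.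

Lemma pn6 n : n < 15 -> ((pn n).1 < 6) && ((pn n).2 < 6).
Proof. by move=> /pn_ok /andP [h1 h2]; rewrite h2 (ltn_trans h1 h2). Qed.

Lemma TC_mem l n : (n \in TC l) = (n < 15) && ((es n \subset tri l) || (es n \subset ~: tri l)).
Proof.
rewrite mem_filter mem_iota /= andbC; case hn: (n < 15) => //=.
move: (pn6 hn) => /andP [h1 h2].
rewrite !es_sub // !inE !inordK //.
by case: ((pn n).1 \in l); case: ((pn n).2 \in l).
Qed.

Lemma BrC_mem l n : (n \in BrC l) = (n < 15) && ~~ ((es n \subset tri l) || (es n \subset ~: tri l)).
Proof.
rewrite mem_filter mem_iota /= andbC; case hn: (n < 15) => //=.
move: (pn6 hn) => /andP [h1 h2].
rewrite !es_sub // !inE !inordK //.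
by case: ((pn n).1 \in l); case: ((pn n).2 \in l).
Qed.

Lemma TT_eq l : \bigcup_(C in Pf l) tri_edges C = [set x in map es (TC l)].
Proof.
apply/setP => e; rewrite inE; apply/bigcupP/mapP.
  case=> D; rewrite !inE => /orP [] /eqP -> /andP [/cards2P [u [v [neq Euv]]] hs];
  have [n hn En] := es_uv neq; exists n; rewrite ?Euv ?En //;
  by rewrite TC_mem hn En -Euv hs ?orbT.
case=> n; rewrite TC_mem => /andP [hn /orP [] hs] ->.
  by exists (tri l); rewrite !inE ?eqxx // /is_edge card_es.
by exists (~: tri l); rewrite !inE ?eqxx ?orbT // /is_edge card_es.
Qed.

Lemma cross_in l (D : {set V}) u v : (D = tri l \/ D = ~: tri l) -> u \in D -> v \in ~: D ->
  exists2 n, n \in BrC l & [set u; v] = es n.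
Proof.
move=> hD hu hv.
have neq : u != v by apply/eqP => E; move: hv; rewrite inE -E hu.
have [n hn En] := es_uv neq; exists n; last by rewrite En.
rewrite BrC_mem hn En !subUset !sub1set.
by case: hD hu hv => ->; rewrite !inE; do 2 case: (_ \in l).
Qed.

Lemma bridge_in l e : is_bridge (Pf l) e -> exists2 n, n \in BrC l & e = es n.
Proof.
case/existsP => C /andP [HC /existsP [C' /andP [HC' /andP [neq /existsP [u /andP [hu /existsP [v /andP [hv /eqP ->]]]]]]]].
move: HC HC'; rewrite !inE => /orP [] /eqP EC /orP [] /eqP EC'; subst C C'.
- by rewrite eqxx in neq.
- by apply: (cross_in (D := tri l)); [left | |].
- by apply: (cross_in (D := ~: tri l)); [right | | rewrite setCK].
- by rewrite eqxx in neq.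
Qed.

Lemma cnt_eq l (B : {set {set V}}) bb : is_bridge (Pf l) bb ->
  #|walk_edges (Pf l) bb :&: (B :\ bb)| = count (fun n => es n \in B) (TC l).
Proof.
move=> /bridge_in [n hn ->]; rewrite /walk_edges TT_eq.
have hn15 : n < 15 by move: hn; rewrite BrC_mem => /andP [].
have nT : es n \notin map es (TC l).
  apply/mapP => [[n' hn' E]].
  have hn'15 : n' < 15 by move: hn'; rewrite TC_mem => /andP [].
  move: (es_inj hn15 hn'15 E) => En; subst n'.
  by move: hn hn'; rewrite BrC_mem TC_mem => /andP [_ /negbTE ->] /andP [].
have -> : ([set x in map es (TC l)] :|: [set es n]) :&: (B :\ es n) =
          [set x in [seq x <- map es (TC l) | x \in B]].
  apply/setP => x; rewrite !inE mem_filter.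
  case: (x =P es n) => [->|_] /=; rewrite ?(negbTE nT) /=; first by rewrite andbF.
  by rewrite orbF andbC.
have U : uniq [seq x <- map es (TC l) | x \in B].
  apply: filter_uniq; rewrite map_inj_in_uniq ?filter_uniq ?iota_uniq //.
  move=> a c; rewrite !TC_mem => /andP [ha _] /andP [hc _]; exact: es_inj.
by rewrite cardsE (card_uniqP U) size_filter count_map.
Qed.

Lemma l0 l : l \in plist -> 0 \in l.
Proof. have H : all (fun l => 0 \in l) plist by []. by move=> h; apply: (allP H). Qed.

Lemma tri_card l : l \in plist -> #|tri l| = 3.
Proof.
have H : all (fun l => count (fun i => i \in l) (iota 0 6) == 3) plist by [].
move=> h; rewrite card_tri; apply: (etrans _ (eqP (allP H l h))).
by apply: eq_in_count => i; rewrite mem_iota => /andP [_ hi]; rewrite tri_in.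
Qed.

Lemma Pf_pairs l : l \in plist -> Pf l \in pairs.
Proof.
move=> h; rewrite inE; apply/existsP; exists (tri l); apply/existsP; exists (~: tri l).
have c3 : #|~: tri l| = 3.
  by have := cardsC (tri l); rewrite card_ord tri_card // => /eqP; rewrite -[6]/(3 + 3) eqn_add2l => /eqP.
rewrite /is_triangle tri_card // c3 disjoints_subset setCK subxx /=; exact/eqP.
Qed.

Lemma Pf_inj : {in plist &, injective Pf}.
Proof.
move=> l l' hl hl' E.
have Ht : tri l \in Pf l' by rewrite -E !inE eqxx.
have Et : tri l = tri l'.
  move: Ht; rewrite !inE => /orP [/eqP //|/eqP Ec].
  have := tri_in l (isT : 0 < 6); rewrite Ec inE tri_in // (l0 hl) (l0 hl') //.
have H : all (fun s : seq nat => s == [seq i <- iota 0 6 | i \in s]) plist by [].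
rewrite (eqP (allP H l hl)) (eqP (allP H l' hl')).
apply: eq_in_filter => i; rewrite mem_iota => /andP [_ hi].
by rewrite -!tri_in // Et.
Qed.

Lemma tri_ex (C : {set V}) : #|C| = 3 -> inord 0 \in C -> exists2 l, l \in plist & C = tri l.
Proof.
move=> c3 h0; exists [seq i <- iota 0 6 | inord i \in C].
  have := allP mask_ok _ (allm_mem [seq (inord i \in C) | i <- iota 0 6]).
  rewrite -filter_mask => /implyP; apply.
  by rewrite size_filter -card_tri c3 eqxx mem_filter h0.
apply/setP => x; rewrite inE mem_filter mem_iota /= ltn_ord inord_val.
by rewrite andbT.
Qed.

Lemma pairs_Pf P : P \in pairs -> exists2 l, l \in plist & P = Pf l.
Proof.
rewrite inE => /existsP [C /existsP [C' /and4P [t1 t2 dj /eqP ->]]].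
have EC' : C' = ~: C.
  apply/eqP; rewrite eqEcard -disjoints_subset disjoint_sym dj /=.
  have := cardsC C; rewrite card_ord (eqP t1) (eqP t2).
  by move=> /eqP; rewrite -[6]/(3 + 3) eqn_add2l => /eqP ->.
subst C'.
case h0: ((inord 0 : V) \in C).
  have [l hl El] := tri_ex (eqP t1) h0; exists l => //; by rewrite /Pf El.
have h0' : (inord 0 : V) \in ~: C by rewrite inE h0.
have c3 : #|~: C| = 3 by exact: (eqP t2).
have [l hl El] := tri_ex c3 h0'; exists l => //.
by rewrite /Pf -El setCK setUC.
Qed.

Theorem theorem3p3 :
  ~ exists b : {set {set V}} -> {set V},
      let B := [set b P | P in pairs] in
      let cnt := fun P => #|walk_edges P (b P) :&: (B :\ b P)| in
      [/\ (forall P, P \in pairs -> is_bridge P (b P)),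
          (forall P, P \in pairs -> cnt P <= 2)
        & #|[set P in pairs | cnt P == 2]| <= 2].
Proof.
case=> b; cbv zeta; case=> Hbr Hle Hcnt.
set B := [set b P | P in pairs] in Hle Hcnt.
pose m := mkseq (fun n => es n \in B) 15.
have Hc l : l \in plist -> #|walk_edges (Pf l) (b (Pf l)) :&: (B :\ b (Pf l))| = count (nth false m) (TC l).
  move=> hl; rewrite cnt_eq ?Hbr ?Pf_pairs //; apply: eq_in_count => n.
  by rewrite TC_mem => /andP [hn _]; rewrite nth_mkseq.
have Ecnt : #|[set P in pairs | #|walk_edges P (b P) :&: (B :\ b P)| == 2]| =
            count (fun l => count (nth false m) (TC l) == 2) plist.
  have -> : [set P in pairs | #|walk_edges P (b P) :&: (B :\ b P)| == 2] =
            [set x in map Pf [seq l <- plist | count (nth false m) (TC l) == 2]].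
    apply/setP => P; rewrite !inE; apply/andP/mapP.
      case=> hP; have [l hl EP] : exists2 l, l \in plist & P = Pf l by apply: pairs_Pf; rewrite inE.
       subst P => hc.
      by exists l => //; rewrite mem_filter hl andbT -Hc.
    case=> l; rewrite mem_filter => /andP [hq hl] ->; split; first by have := Pf_pairs hl; rewrite inE.
    by rewrite Hc.
  have U : uniq [seq Pf l | l <- [seq l <- plist | count (nth false m) (TC l) == 2]].
    rewrite map_inj_in_uniq ?filter_uniq //.
    by move=> x y; rewrite !mem_filter => /andP [_ hx] /andP [_ hy]; apply: Pf_inj.
  by rewrite cardsE (card_uniqP U) size_map size_filter.
have hm : m \in allm 15 by have := allm_mem m; rewrite size_mkseq.
have := check_all hm; move/negP; apply.
apply/and3P; split.
- rewrite all_map; apply/allP => l hl /=.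
  have [n hn E] := bridge_in (Hbr _ (Pf_pairs hl)).
  have hn15 : n < 15 by move: hn; rewrite BrC_mem => /andP [].
  apply/hasP; exists n => //; rewrite nth_mkseq // -E.
  exact: imset_f (Pf_pairs hl).
- rewrite all_map; apply/allP => l hl /=; rewrite -Hc //; exact: Hle (Pf_pairs hl).
- rewrite count_map; apply: leq_trans _ Hcnt; rewrite Ecnt; exact: leqnn.
Qed.
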